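(* Let $\Lambda$ be a normal subshift and $\mathfrak L_\Lambda^{\min}$ its minimal presentation. Then $\mathfrak L_\Lambda^{\min}$ satisfies condition (I).
   Context: Subshifts over a finite alphabet $\Sigma$: $B_l(\Lambda)$, $B_*(\Lambda)$ admissible words; $X_\Lambda$ the right one-sided subshift. $\Gamma_l^-(\mu)=\{\nu\in B_l(\Lambda):\nu\mu\in B_*(\Lambda)\}$, $\Gamma_*^+(\mu)=\{\nu:\mu\nu\in B_*(\Lambda)\}$; $\mu$ is $l$-synchronizing if $\Gamma_l^-(\mu)=\Gamma_l^-(\mu\omega)$ for all $\omega\in\Gamma_*^+(\mu)$, $S_l(\Lambda)$ the set of these; $\mu\sim_l\nu$ iff $\Gamma_l^-(\mu)=\Gamma_l^-(\nu)$. $\Lambda$ is normal if irreducible, infinite as a set, and for every $\eta\in B_l(\Lambda)$ and $k>l$ there is $\nu\in S_k(\Lambda)$ with $\eta\nu\in S_{k-l}(\Lambda)$. The minimal presentation $\mathfrak L_\Lambda^{\min}$ is the labeled Bratteli-type diagram with vertex sets $V_0$ a singleton and $V_l=S_l(\Lambda)/\!\sim_l$ for $l\ge1$, an edge labeled $\alpha$ from $[\alpha\nu]_l$ to $[\nu]_{l+1}$ for every $\nu\in S_{l+1}(\Lambda)$ and $\alpha\in\Sigma$ with $\alpha\nu\in B_*(\Lambda)$, and maps $\iota([\nu]_{l+1})=[\nu]_l$. For a vertex $v\in V_l$, $\Gamma^+_\infty(v)$ is the set of label sequences $(\lambda(e_1),\lambda(e_2),\dots)$ of infinite paths with $s(e_1)=v$,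 $e_i$ an edge from level $l+i-1$ to level $l+i$ and $t(e_i)=s(e_{i+1})$. The system satisfies condition (I) if $\Gamma^+_\infty(v)$ contains at least two distinct sequences for every vertex $v$. *)

(* Defs.v *)
From mathcomp Require Import all_boot all_order all_algebra.
Set Implicit Arguments. Unset Strict Implicit. Unset Printing Implicit Defensive.
Import GRing.Theory Num.Theory.

Section Subshift.
Variable Sigma : finType.

Definition config := int -> Sigma.
Definition shift (x : config) : config := fun i => x (i + 1)%R.

(* two-sided subshift: closed (product topology) and shift invariant *)
Definition is_subshift (Lam : config -> Prop) : Prop :=
  (forall x, Lam x -> Lam (shift x)) /\
  (forall y, Lam y -> exists x, Lam x /\ shift x = y) /\
  (forall x : config,
     (forall n : nat, exists y, Lam y /\
        forall i : int, (- n%:Z <= i <= n%:Z)%R -> y i = x i) -> Lam x).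

Fixpoint occurs_at (x : config) (i : int) (w : seq Sigma) : Prop :=
  match w with
  | [::] => True
  | a :: w' => x i = a /\ occurs_at x (i + 1)%R w'
  end.

Definition admissible (Lam : config -> Prop) (w : seq Sigma) : Prop :=
  exists x, Lam x /\ exists i, occurs_at x i w.

Definition Bl (Lam : config -> Prop) (l : nat) (w : seq Sigma) : Prop :=
  size w = l /\ admissible Lam w.

Definition Gamma_minus (Lam : config -> Prop) (l : nat) (mu nu : seq Sigma) : Prop :=
  Bl Lam l nu /\ admissible Lam (nu ++ mu).

Definition Gamma_plus (Lam : config -> Prop) (mu nu : seq Sigma) : Prop :=
  admissible Lam (mu ++ nu).

Definition lequiv (Lam : config -> Prop) (l : nat) (mu nu : seq Sigma) : Prop :=
  forall eta, Gamma_minus Lam l mu eta <-> Gamma_minus Lam l nu eta.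

Definition S_l (Lam : config -> Prop) (l : nat) (mu : seq Sigma) : Prop :=
  admissible Lam mu /\
  forall omega, Gamma_plus Lam mu omega -> lequiv Lam l mu (mu ++ omega).

Definition irreducible (Lam : config -> Prop) : Prop :=
  forall mu nu, admissible Lam mu -> admissible Lam nu ->
    exists omega, admissible Lam (mu ++ omega ++ nu).

Definition infinite_set (Lam : config -> Prop) : Prop :=
  ~ exists s : seq config, forall x, Lam x -> exists2 k, k < size s & x = nth x s k.

Definition normal (Lam : config -> Prop) : Prop :=
  [/\ irreducible Lam, infinite_set Lam &
    forall (l : nat) (eta : seq Sigma) (k : nat), Bl Lam l eta -> l < k ->
      exists nu, S_l Lam k nu /\ S_l Lam (k - l) (eta ++ nu)].

(* Minimal presentation.  A vertex of V_l is represented by a word: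
   V_0 = {[::]} (singleton), and for l >= 1 the class [mu]_l of mu in S_l. *)
Definition vertex_rep (Lam : config -> Prop) (l : nat) (mu : seq Sigma) : Prop :=
  if l is 0 then mu = [::] else S_l Lam l mu.

Definition same_vertex (Lam : config -> Prop) (l : nat) (mu nu : seq Sigma) : Prop :=
  if l is 0 then True else lequiv Lam l mu nu.

(* There is an edge labeled a from the vertex represented by mu (level l)
   to the vertex represented by nu' (level l+1): i.e. there is nu in S_{l+1}
   with a nu admissible, [a nu]_l = [mu]_l and [nu]_{l+1} = [nu']_{l+1}. *)
Definition edge (Lam : config -> Prop) (l : nat) (mu : seq Sigma) (a : Sigma)
    (nu' : seq Sigma) : Prop :=
  exists nu, [/\ S_l Lam l.+1 nu, admissible Lam (a :: nu),
    same_vertex Lam l (a :: nu) mu & same_vertex Lam l.+1 nu nu'].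

Definition Gamma_inf (Lam : config -> Prop) (l : nat) (mu : seq Sigma)
    (alpha : nat -> Sigma) : Prop :=
  exists w : nat -> seq Sigma,
    w 0%N = mu /\
    forall i : nat, vertex_rep Lam (l + i).+1 (w i.+1) /\
                    edge Lam (l + i) (w i) (alpha i) (w i.+1).

Definition condition_I (Lam : config -> Prop) : Prop :=
  forall (l : nat) (mu : seq Sigma), vertex_rep Lam l mu ->
    exists alpha beta, [/\ Gamma_inf Lam l mu alpha, Gamma_inf Lam l mu beta &
                           exists n, alpha n <> beta n].

End Subshift.

(* Main.v *)
Require Import Defs.
From mathcomp Require Import all_boot all_order all_algebra.
From mathcomp Require Import zify ring.
From Stdlib Require Import Classical ClassicalEpsilon FunctionalExtensionality.
Set Implicit Arguments. Unset Strict Implicit. Unset Printing Implicit Defensive.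
Import GRing.Theory Num.Theory.

Section L.
Variable Sigma : finType.
Implicit Types (x : config Sigma) (Lam : config Sigma -> Prop).

Lemma occurs_cat x u v i : occurs_at x i (u ++ v) <->
  occurs_at x i u /\ occurs_at x (i + (size u)%:Z)%R v.
Proof.
elim: u i => [|a u IH] i /=; first by rewrite addr0; tauto.
rewrite IH.
have -> : (i + 1 + (size u)%:Z = i + (size u).+1%:Z)%R by lia.
tauto.
Qed.

Lemma occurs_nth x w i d j : occurs_at x i w -> j < size w ->
  x (i + j%:Z)%R = nth d w j.
Proof.
elim: w i j => [|a w IH] i [|j] //=.
- by rewrite addr0 => -[].
- move=> [_ H] Hj. rewrite -(IH _ _ H Hj).
  by rewrite intS addrA.
Qed.

Fixpoint window x (i : int) (n : nat) : seq Sigma :=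
  if n is n'.+1 then x i :: window x (i + 1)%R n' else [::].

Lemma occurs_window x i n : occurs_at x i (window x i n).
Proof. by elim: n i => [|n IH] i //=. Qed.

Lemma size_window x i n : size (window x i n) = n.
Proof. by elim: n i => [|n IH] i //=; rewrite IH. Qed.


Variable Lam : config Sigma -> Prop.

Lemma adm_catl u v : admissible Lam (u ++ v) -> admissible Lam u.
Proof. by move=> [x [Hx [i /occurs_cat [H _]]]]; exists x; split=> //; exists i. Qed.

Lemma adm_catr u v : admissible Lam (u ++ v) -> admissible Lam v.
Proof. by move=> [x [Hx [i /occurs_cat [_ H]]]]; exists x; split=> //; eexists; exact H. Qed.

Lemma adm_left w : admissible Lam w -> exists a, admissible Lam (a :: w).
Proof.
move=> [x [Hx [i H]]]; exists (x (i - 1)%R); exists x; split=> //.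
by exists (i - 1)%R => /=; rewrite subrK.
Qed.

Lemma adm_right w : admissible Lam w -> exists a, admissible Lam (w ++ [:: a]).
Proof.
move=> [x [Hx [i H]]]; exists (x (i + (size w)%:Z)%R); exists x; split=> //.
by exists i; apply/occurs_cat.
Qed.

Lemma lequiv_refl l u : lequiv Lam l u u.
Proof. by []. Qed.

Lemma lequiv_sym l u v : lequiv Lam l u v -> lequiv Lam l v u.
Proof. by move=> H e; rewrite H. Qed.

Lemma S_ext l mu om : S_l Lam l mu -> admissible Lam (mu ++ om) -> lequiv Lam l mu (mu ++ om).
Proof. by move=> [_ H] /H. Qed.

Lemma S_prefix m k nu rho : S_l Lam (m + k) nu -> admissible Lam (rho ++ nu) ->
  size rho = m -> S_l Lam k (rho ++ nu).
Proof.
move=> [Hn Hs] Ha Hr; split; first done; move=> om Hp eta.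
have Hno : admissible Lam (nu ++ om) by apply: (adm_catr (u:=rho)); rewrite catA; exact: Hp.
have E := Hs om Hno (eta ++ rho).
rewrite /Gamma_minus /Bl in E *.
rewrite !catA in E.
rewrite !catA.
have Hs' : size (eta ++ rho) = m + k <-> size eta = k by rewrite size_cat Hr addnC; split=> [/eqP|->//]; rewrite eqn_add2l => /eqP.
split=> -[[Hse Hae] H].
- have [_ H2] := (proj1 E) (conj (conj (proj2 Hs' Hse) (adm_catl H)) H).
  by [].
- have [_ H2] := (proj2 E) (conj (conj (proj2 Hs' Hse) (adm_catl (adm_catl H))) H).
  by [].
Qed.

Lemma S_mono k tau : S_l Lam k.+1 tau -> S_l Lam k tau.
Proof.
move=> [Ht Hs]; split; first done; move=> om Hp eta.
have E a := Hs om Hp (a :: eta).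
rewrite /Gamma_minus /Bl in E *.
split=> -[[Hse Hae] H].
- have [a Ha] := adm_left H.
  have [_ H2] := (proj1 (E a)) (conj (conj (f_equal S Hse) (adm_catl (u := a :: eta) Ha)) Ha).
  by split=> //; apply: (adm_catr (u := [:: a])).
- have [a Ha] := adm_left H.
  have [_ H2] := (proj2 (E a)) (conj (conj (f_equal S Hse) (adm_catl (u := a :: eta) Ha)) Ha).
  by split=> //; apply: (adm_catr (u := [:: a])).
Qed.

Lemma inf_nonempty : infinite_set Lam -> exists x, Lam x.
Proof.
move=> Hi; apply: NNPP => Hn; apply: Hi; exists [::] => x Hx.
by case: Hn; exists x.
Qed.

Lemma adm_nil : infinite_set Lam -> admissible Lam [::].
Proof. by move=> /inf_nonempty [x Hx]; exists x; split=> //; exists 0%R. Qed.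

Lemma vrep_adm l mu : infinite_set Lam -> vertex_rep Lam l mu -> admissible Lam mu.
Proof. by case: l => [|l] Hi /= H; [rewrite H; apply: adm_nil | case: H]. Qed.

Lemma prepend l mu a nu beta : edge Lam l mu a nu -> vertex_rep Lam l.+1 nu ->
  Gamma_inf Lam l.+1 nu beta ->
  Gamma_inf Lam l mu (fun i => if i is j.+1 then beta j else a).
Proof.
move=> He Hv [w [w0 Hw]].
exists (fun i => if i is j.+1 then w j else mu); split=> // -[|j].
  by rewrite addn0 w0.
by rewrite addnS -addSn; apply: Hw.
Qed.

Lemma step l mu : normal Lam -> vertex_rep Lam l mu ->
  exists a nu, edge Lam l mu a nu /\ vertex_rep Lam l.+1 nu.
Proof.
move=> [Hirr Hinf Hn] Hv.
case: mu Hv => [|b mu'] Hv.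
  have [nu [Hnu _]] := Hn 0 [::] l.+1 (conj erefl (adm_nil Hinf)) (ltn0Sn l).
  have [a Ha] := adm_left (proj1 Hnu).
  exists a, nu; split=> //; exists nu; split=> //.
  case: l Hv {Hnu} => [|l] //= Hv.
  by apply: lequiv_sym; apply: (S_ext Hv).
case: l Hv => [|l] Hv //=.
have Hadm := proj1 Hv.
have Hlt : size (b :: mu') < size (b :: mu') + l.+1 by rewrite addnS ltnS leq_addr.
have [nu [Hnu Hmn]] := Hn (size (b :: mu')) (b :: mu') (size (b :: mu') + l.+1)
   (conj erefl Hadm) Hlt.
have Hs : S_l Lam l.+2 (mu' ++ nu).
  apply: (S_prefix (m := size mu')) => //.
    by rewrite addnS -addSn.
  exact: (adm_catr (u := [:: b])) (proj1 Hmn).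
exists b, (mu' ++ nu); split=> //; exists (mu' ++ nu); split=> //.
- exact: proj1 Hmn.
- by apply: lequiv_sym; apply: (S_ext Hv (proj1 Hmn)).
Qed.

Lemma inf_path l mu : normal Lam -> vertex_rep Lam l mu -> exists alpha, Gamma_inf Lam l mu alpha.
Proof.
move=> Hnorm Hv.
have [x0 _] := inf_nonempty (let: And3 _ H _ := Hnorm in H).
have Hc : forall p : nat * seq Sigma, exists q : Sigma * seq Sigma,
   vertex_rep Lam p.1 p.2 -> edge Lam p.1 p.2 q.1 q.2 /\ vertex_rep Lam p.1.+1 q.2.
  move=> [l' m'] /=; case: (classic (vertex_rep Lam l' m')) => H.
    by have [a [nu Hs]] := step Hnorm H; exists (a, nu).
  by exists (x0 0%R, [::]).
pose f p := proj1_sig (constructive_indefinite_description _ (Hc p)).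
have Hf p : vertex_rep Lam p.1 p.2 -> edge Lam p.1 p.2 (f p).1 (f p).2 /\ vertex_rep Lam p.1.+1 (f p).2
  := proj2_sig (constructive_indefinite_description _ (Hc p)).
pose w := fix w (i : nat) := if i is j.+1 then (f (l + j, w j)).2 else mu.
have Hw i : vertex_rep Lam (l + i) (w i).
  elim: i => [|i IH]; first by rewrite addn0.
  by rewrite addnS; exact: (proj2 (Hf (l + i, w i) IH)).
exists (fun i => (f (l + i, w i)).1), w; split=> // i.
have [H1 H2] := Hf (l + i, w i) (Hw i).
by split.
Qed.

Lemma path_word d sigma : normal Lam -> forall l mu tau, vertex_rep Lam l mu ->
  admissible Lam (sigma ++ tau) -> S_l Lam (l + size sigma) tau ->
  same_vertex Lam l (sigma ++ tau) mu ->
  exists alpha, Gamma_inf Lam l mu alpha /\ forall j, j < size sigma -> alpha j = nth d sigma j.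
Proof.
move=> Hnorm; elim: sigma => [|a s IH] l mu tau Hv Ha Hs Hsv.
  by have [al H] := inf_path Hnorm Hv; exists al.
have Hst : S_l Lam l.+1 (s ++ tau).
  apply: (S_prefix (m := size s)) => //.
    by rewrite addnS -addSn addnC.
  exact: (adm_catr (u := [:: a])) Ha.
have He : edge Lam l mu a (s ++ tau).
  by exists (s ++ tau); split.
have Hs' : S_l Lam (l.+1 + size s) tau by rewrite addSnnS.
have [al [Hal Hn]] := IH l.+1 (s ++ tau) tau Hst (adm_catr (u := [:: a]) Ha)
   Hs' (lequiv_refl _ _).
exists (fun i => if i is j.+1 then al j else a); split.
  exact: prepend He Hst Hal.
by case=> [|j] //= Hj; apply: Hn.
Qed.

Lemma bound (P : nat -> int -> Prop) p : (forall k, k < p -> exists i, P k i) ->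
  exists N, forall k, k < p -> exists i, (absz i <= N)%N /\ P k i.
Proof.
elim: p => [|p IH] H; first by exists 0.
have [N HN] := IH (fun k Hk => H k (ltnW Hk)).
have [i0 Hi0] := H p (ltnSn p).
exists (maxn N (absz i0)) => k; rewrite ltnS leq_eqVlt => /orP [/eqP->|Hk].
  by exists i0; rewrite leq_maxr.
have [i [Hi HP]] := HN k Hk; exists i; split=> //.
by rewrite leq_max Hi.
Qed.

Lemma occurs_nth_window x i n j d : j < n -> nth d (window x i n) j = x (i + j%:Z)%R.
Proof.
move=> Hj; symmetry; apply: occurs_nth (occurs_window x i n) _.
by rewrite size_window.
Qed.

Lemma two_ext mu : irreducible Lam -> infinite_set Lam -> mu <> [::] -> admissible Lam mu ->
  exists om1 om2, [/\ size om1 = size om2, admissible Lam (mu ++ om1),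
                      admissible Lam (mu ++ om2) & om1 <> om2].
Proof.
move=> Hirr Hinf Hne Hmu.
apply: NNPP => HU.
have U : forall o1 o2, size o1 = size o2 -> admissible Lam (mu ++ o1) ->
    admissible Lam (mu ++ o2) -> o1 = o2.
  move=> o1 o2 Hs H1 H2; apply: NNPP => Hne'; apply: HU; exists o1, o2; by split.
pose n := size mu.
have U' : forall x x' i i' j, Lam x -> Lam x' -> occurs_at x i mu -> occurs_at x' i' mu ->
   x (i + n%:Z + j%:Z)%R = x' (i' + n%:Z + j%:Z)%R.
  move=> x x' i i' j Hx Hx' Hi Hi'.
  have E : window x (i + n%:Z)%R j.+1 = window x' (i' + n%:Z)%R j.+1.
    apply: U; first by rewrite !size_window.
    - exists x; split=> //; exists i; apply/occurs_cat; split=> //; exact: occurs_window.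
    - exists x'; split=> //; exists i'; apply/occurs_cat; split=> //; exact: occurs_window.
  have := congr1 (fun s => nth (x 0%R) s j) E.
  by rewrite !occurs_nth_window.
clear U HU.
have [om Hom] := Hirr mu mu Hmu Hmu.
have [x1 [Hx1 [i1 Hocc]]] := Hom.
move: Hocc => /occurs_cat [Hm1 /occurs_cat [_ Hm2]].
pose p := (n + size om)%N.
have Hp : 0 < p by rewrite /p /n; case: (mu) Hne.
pose y (j : nat) := x1 (i1 + n%:Z + j%:Z)%R.
have Hper j : y (j + p) = y j.
  rewrite /y (U' x1 x1 i1 (i1 + n%:Z + (size om)%:Z)%R j Hx1 Hx1 Hm1 Hm2).
  congr x1; rewrite /p !PoszD; ring.
have Hmod r : y r = y (r %% p).
  have Hm m r' : y (r' + m * p) = y r'.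
    elim: m => [|m IH]; first by rewrite mul0n addn0.
    by rewrite mulSnr addnA Hper IH.
  by rewrite {1}(divn_eq r p) addnC Hm.
pose c (k : nat) : config Sigma := fun i => y (absz ((k%:Z + i) %% p%:Z)%Z).
have Cover : forall x, Lam x -> forall N : nat,
    exists2 k, k < p & forall i : int, (absz i <= N)%N -> x i = c k i.
  move=> x Hx N.
  have HW : admissible Lam (window x (- N%:Z)%R (N + N).+1).
    by exists x; split=> //; exists (- N%:Z)%R; apply: occurs_window.
  have [om' [x2 [Hx2 [i2 Hocc2]]]] := Hirr mu _ Hmu HW.
  move: Hocc2 => /occurs_cat [Hm3 /occurs_cat [_ HW2]].
  exists ((size om' + N) %% p); first by rewrite ltn_mod.
  move=> i Hi.
  pose j := absz (i + N%:Z)%R.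
  have Hj : (j%:Z = i + N%:Z)%R by rewrite /j; lia.
  have HjL : j < (N + N).+1 by rewrite /j; lia.
  have E1 : x i = x2 (i2 + n%:Z + (size om' + j)%:Z)%R.
    have := occurs_nth (x i) HW2 (j := j); rewrite size_window => /(_ HjL).
    rewrite occurs_nth_window // => E.
    have -> : i = (- N%:Z + j%:Z)%R by rewrite Hj; ring.
    rewrite -E; congr x2; rewrite PoszD; ring.
  rewrite E1 (U' x2 x1 i2 i1 _ Hx2 Hx1 Hm3 Hm1) -/(y _) Hmod /c.
  congr y.
  rewrite -(modz_nat (size om' + N) p) modzDml.
  have -> : (((size om' + N)%N)%:Z + i = ((size om' + j)%N)%:Z)%R by rewrite !PoszD Hj; ring.
  by rewrite modz_nat.
apply: Hinf; exists (mkseq c p) => x Hx.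
apply: NNPP => Hno.
have Hall : forall k, k < p -> exists i, x i <> c k i.
  move=> k Hk; apply: NNPP => Hk'; apply: Hno; exists k; first by rewrite size_mkseq.
  rewrite nth_mkseq //; apply: functional_extensionality => i.
  by apply: NNPP => Hi; apply: Hk'; exists i.
have [N HN] := bound Hall.
have [k Hk Hc] := Cover x Hx N.
have [i [Hi Hne']] := HN k Hk.
by apply: Hne'; apply: Hc.
Qed.

End L.

Theorem proposition2p14 (Sigma : finType) (Lam : config Sigma -> Prop) :
  is_subshift Lam -> normal Lam -> condition_I Lam.
Proof.
move=> _ Hnorm l mu Hv.
have [Hirr Hinf Hn] := Hnorm.
have Hmu := vrep_adm Hinf Hv.
have [c Hc] := adm_right Hmu.
have Hne : mu ++ [:: c] <> [::] by case: (mu).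
have [o1 [o2 [Hs H1 H2 Ho]]] := two_ext Hirr Hinf Hne Hc.
have Hbranch : forall o, admissible Lam ((mu ++ [:: c]) ++ o) ->
    exists alpha, Gamma_inf Lam l mu alpha /\
      forall j, j < size (mu ++ c :: o) -> alpha j = nth c (mu ++ c :: o) j.
  move=> o Ho'.
  have Hsig : admissible Lam (mu ++ c :: o) by rewrite -cat1s catA.
  have Hlt : size (mu ++ c :: o) < (size (mu ++ c :: o) + l).+1 by rewrite ltnS leq_addr.
  have [nu [Hnu Hsn]] := Hn _ _ _ (conj erefl Hsig) Hlt.
  apply: (path_word c Hnorm Hv (proj1 Hsn)).
    by rewrite addnC; apply: S_mono.
  case: l Hv Hsn {Hlt Hnu} => [|l] Hv Hsn //=.
  apply: lequiv_sym; rewrite -catA; apply: (S_ext Hv).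
  by rewrite catA; exact: (proj1 Hsn).
have [j [Hj Hnj]] : exists j, j < size o1 /\ nth c o1 j <> nth c o2 j.
  apply: NNPP => HH; apply: Ho; apply: (eq_from_nth (x0 := c) Hs) => i Hi.
  by apply: NNPP => Hne'; apply: HH; exists i.
have [a1 [Ha1 Ha1n]] := Hbranch o1 H1.
have [a2 [Ha2 Ha2n]] := Hbranch o2 H2.
exists a1, a2; split=> //; exists (size mu + j.+1).
have Hn1 : size mu + j.+1 < size (mu ++ c :: o1) by rewrite size_cat ltn_add2l.
have Hn2 : size mu + j.+1 < size (mu ++ c :: o2) by rewrite size_cat ltn_add2l /= -Hs.
rewrite (Ha1n _ Hn1) (Ha2n _ Hn2) !nth_cat ltnNge leq_addr /= addKn.
exact: Hnj.
Qed.
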